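(* Under the assumptions of the preceding setting (channel $y=hx+v$, $v\sim\mathcal{CN}(0,1)$, perfect CSI at transmitter and receiver, $|h|^2$ with continuous density $f$, finite mean, and strictly increasing CDF $F$ on its support; fixed $A>1$), consider the On-Off power allocation $$P(h)=\begin{cases}A\,\mathrm{SNR}, & |h|^2\ge F^{-1}(1-\frac1A),\\ 0,&\text{otherwise},\end{cases}$$ which satisfies $\mathbf{E}[P(h)]\le\mathrm{SNR}$ and $P(h)\le A\,\mathrm{SNR}$. Its rate $$R(\mathrm{SNR})=\int_{F^{-1}(1-\frac1A)}^\infty \log(1+A\,\mathrm{SNR}\,t)\,f(t)\,dt$$ satisfies $\lim_{\mathrm{SNR}\to0}R(\mathrm{SNR})/C(\mathrm{SNR})=1$, where $C(\mathrm{SNR})$ is the capacity under average power constraint $\mathrm{SNR}$ and peak power constraint $A\,\mathrm{SNR}$.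
   Context: $C(\mathrm{SNR})=\sup\mathbf{E}[\log(1+P(h)|h|^2)]$ over measurable $P(h)\ge 0$ with $\mathbf{E}[P(h)]\le\mathrm{SNR}$ and $\max_hP(h)\le A\,\mathrm{SNR}$. Logarithms are natural. *)

(* Defs.v *)
From HB Require Import structures.
From mathcomp Require Import all_boot all_order all_algebra.
From mathcomp Require Import all_classical all_reals all_analysis.
Set Implicit Arguments. Unset Strict Implicit. Unset Printing Implicit Defensive.
Import Order.TTheory GRing.Theory Num.Theory.
Import numFieldNormedType.Exports.
Local Open Scope classical_set_scope.
Local Open Scope ring_scope.

Section Defs.
Variable R : realType.
Local Notation mu := (@lebesgue_measure R).

(* expectation of phi(|h|^2) when |h|^2 has density f (w.r.t. Lebesgue) *)
Definition expect (f phi : R -> R) : \bar R :=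
  (\int[mu]_(t in setT) (phi t * f t)%:E)%E.

Definition cdf (f : R -> R) (x : R) : R :=
  fine (\int[mu]_(t in `]-oo, x]) (f t)%:E)%E.

(* F^{-1}(p) (generalized inverse; the true inverse when F is strictly increasing) *)
Definition cdf_inv (f : R -> R) (p : R) : R := inf [set x | p <= cdf f x].

Definition in_support (f : R -> R) (x : R) : Prop :=
  forall e : R, 0 < e -> cdf f (x - e) < cdf f (x + e).

Definition gain_density (f : R -> R) : Prop :=
  [/\ measurable_fun setT f,
      (forall t, 0 <= f t),
      (forall t, t < 0 -> f t = 0),
      (\int[mu]_(t in setT) (f t)%:E = 1)%E &
      {within `[0, +oo[, continuous f}] /\
  ((\int[mu]_(t in setT) (t * f t)%:E < +oo)%E /\
   (forall x y, x < y -> in_support f x -> in_support f y ->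
                cdf f x < cdf f y)).

(* ergodic rate E[log(1 + P(h)|h|^2)] of a power allocation P (function of |h|^2) *)
Definition rate (f P : R -> R) : \bar R := expect f (fun t => ln (1 + P t * t)).

Definition admissible (f : R -> R) (A snr : R) (P : R -> R) : Prop :=
  [/\ measurable_fun setT P, (forall t, 0 <= P t),
      (expect f P <= snr%:E)%E & (forall t, P t <= A * snr)].

Definition capacity (f : R -> R) (A snr : R) : \bar R :=
  ereal_sup [set rate f P | P in admissible f A snr].

Definition onoff (f : R -> R) (A snr : R) (t : R) : R :=
  if cdf_inv f (1 - A^-1) <= t then A * snr else 0.

End Defs.

(* Main.v *)
Require Import Defs.
From HB Require Import structures.
From mathcomp Require Import all_boot all_order all_algebra.
From mathcomp Require Import all_classical all_reals all_analysis.
From mathcomp Require Import measurable_realfun ring lra.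
Import Order.TTheory GRing.Theory Num.Theory.
Import numFieldNormedType.Exports.
Local Open Scope classical_set_scope.
Local Open Scope ring_scope.

Section Proof.
Variable R : realType.
Local Notation mu := (@lebesgue_measure R).
Variables (f : R -> R) (A : R).
Hypothesis Hf : gain_density f.
Hypothesis A1 : 1 < A.

Let mf : measurable_fun setT f. Proof. by move: Hf => [[? ? ? ? ?] _]. Qed.
Let f0 t : 0 <= f t. Proof. by move: Hf => [[? H ? ? ?] _]. Qed.
Let fn t : t < 0 -> f t = 0. Proof. by move: Hf => [[? ? H ? ?] _]; apply: H. Qed.
Let fint : (\int[mu]_(t in setT) (f t)%:E = 1)%E. Proof. by move: Hf => [[? ? ? H ?] _]. Qed.
Let fmean : (\int[mu]_(t in setT) (t * f t)%:E < +oo)%E. Proof. by move: Hf => [_ [H _]]. Qed.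

Let intf : mu.-integrable setT (EFin \o f).
Proof.
apply/integrableP; split; first exact/measurable_EFinP.
rewrite (_ : (fun x => _) = (fun x => (f x)%:E)) ?fint ?ltry//.
by apply/funext => x /=; rewrite ger0_norm.
Qed.

Definition G (D : set R) : R := fine (\int[mu]_(x in D) (f x)%:E)%E.

Let I_ge0 (D : set R) : (0 <= \int[mu]_(x in D) (f x)%:E)%E.
Proof. by apply: integral_ge0 => x _; rewrite lee_fin. Qed.

Let I_le1 {D : set R} : measurable D -> (\int[mu]_(x in D) (f x)%:E <= 1)%E.
Proof.
move=> mD; rewrite -fint; apply: ge0_subset_integral => //.
- exact/measurable_EFinP.
- by move=> x _; rewrite lee_fin.
Qed.

Lemma GE (D : set R) : measurable D -> (G D)%:E = (\int[mu]_(x in D) (f x)%:E)%E.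
Proof.
move=> mD; rewrite fineK// ge0_fin_numE//.
exact: (le_lt_trans (I_le1 mD) (ltry _)).
Qed.

Lemma G_ge0 (D : set R) : 0 <= G D.
Proof. by rewrite /G fine_ge0. Qed.

Lemma GT : G setT = 1.
Proof. by rewrite /G fint. Qed.

Lemma G_setU (D E : set R) : measurable D -> measurable E -> [disjoint D & E] ->
  G (D `|` E) = G D + G E.
Proof.
move=> mD mE DE; apply/eqP; rewrite -eqe EFinD !GE//; last exact: measurableU.
apply/eqP.
rewrite ge0_integral_setU//.
- apply/measurable_EFinP; exact: measurable_funTS.
- by move=> x _; rewrite lee_fin.
Qed.

Lemma G_abscont e : 0 < e -> exists2 d : R, 0 < d &
  forall D : set R, measurable D -> (mu D < d%:E)%E -> G D < e.
Proof.
move=> e0; have [d [d0 H]] := integral_normr_continuous intf e0.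
exists d => // D mD muD; have := H D mD muD.
by rewrite /Rintegral /G; under eq_integral => x _ do rewrite ger0_norm//.
Qed.


Let mfE (D : set R) : measurable_fun D (fun x => (f x)%:E).
Proof. exact/measurable_EFinP/measurable_funTS. Qed.

Lemma G_zero (D : set R) : (forall x, D x -> x < 0) -> G D = 0.
Proof.
move=> Dn; rewrite /G (eq_integral (cst 0%E)) ?integral0//.
by move=> x; rewrite inE => /Dn /fn ->.
Qed.

Lemma cdf_neg x : x < 0 -> Defs.cdf f x = 0.
Proof.
move=> x0; apply: G_zero => y /=; rewrite in_itv /= => yx.
exact: le_lt_trans yx x0.
Qed.

Lemma cdf_le x y : x <= y -> Defs.cdf f x <= Defs.cdf f y.
Proof.
move=> xy; change (G `]-oo, x] <= G `]-oo, y]); rewrite -lee_fin !GE//.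
apply: ge0_subset_integral => //; try exact: mfE.
- by move=> ? _; rewrite lee_fin.
- by move=> z /=; rewrite !in_itv /= => zx; exact: le_trans zx xy.
Qed.

Lemma cdf_tail x : Defs.cdf f x + G `]x, +oo[ = 1.
Proof.
change (G `]-oo, x] + G `]x, +oo[ = 1).
rewrite -GT -(itv_setU_setT false x) G_setU//.
exact: disjoint_rays.
Qed.

Definition Emean : R := fine (\int[mu]_(t in setT) (t * f t)%:E)%E.

Let tf0 t : 0 <= t * f t.
Proof.
have [t0|t0] := leP 0 t; first exact: mulr_ge0.
by rewrite fn // mulr0.
Qed.

Let mtf (D : set R) : measurable_fun D (fun t => (t * f t)%:E).
Proof.
apply/measurable_EFinP/measurable_funTS.
exact: measurable_funM.
Qed.

Lemma EmeanE : Emean%:E = (\int[mu]_(t in setT) (t * f t)%:E)%E.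
Proof.
rewrite fineK// ge0_fin_numE//.
by apply: integral_ge0 => t _; rewrite lee_fin.
Qed.

Lemma markov x : 0 < x -> x * G `]x, +oo[ <= Emean.
Proof.
move=> x0; rewrite -lee_fin EFinM GE// EmeanE.
rewrite -ge0_integralZl_EFin//; try exact: mfE; last 2 first.
- by move=> ? _; rewrite lee_fin.
- exact: ltW.
apply: (@le_trans _ _ (\int[mu]_(t in `]x, +oo[) (t * f t)%:E)%E).
  apply: (ge0_le_integral mu (measurable_itv _) _ _ (mtf _)).
  - by move=> t _; rewrite lee_fin mulr_ge0 // ltW.
  - apply/measurable_EFinP; apply: measurable_funM => //.
    exact: measurable_funTS.
  - move=> t; rewrite /= in_itv /= andbT => xt.
    by rewrite lee_fin ler_wpM2r // ltW.
apply: (ge0_subset_integral mu (measurable_itv _) measurableT (mtf _)) => //.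
by move=> t _; rewrite lee_fin.
Qed.


Let A0 : 0 < A. Proof. exact: lt_trans ltr01 A1. Qed.
Let AV : A * A^-1 = 1. Proof. by rewrite mulfV // gt_eqF. Qed.
Let Ai0 : 0 < A^-1. Proof. by rewrite invr_gt0. Qed.
Let Ai1 : A^-1 < 1. Proof. by rewrite invf_lt1. Qed.

Definition pp := 1 - A^-1.
Definition S := [set x | pp <= Defs.cdf f x].
Definition cc := cdf_inv f pp.

Lemma S_ge0 x : S x -> 0 <= x.
Proof.
move=> Sx; rewrite leNgt; apply/negP => x0; move: Sx.
by rewrite /S /= cdf_neg //; rewrite /pp; have := Ai1; lra.
Qed.

Lemma Emean_ge0 : 0 <= Emean.
Proof. by rewrite /Emean fine_ge0 // integral_ge0 // => t _; rewrite lee_fin. Qed.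

Lemma S_nonempty : S (Emean * A + 1).
Proof.
set x0 := Emean * A + 1.
have E0 := Emean_ge0.
have x00 : 0 < x0 by rewrite /x0; have := A0; nra.
have := markov x0 x00; have := cdf_tail x0; have := G_ge0 `]x0, +oo[.
rewrite /S /= /pp; set g := G _ => g0 ct mk.
have := AV; have := A1; have := Ai0.
have h1 : x0 * g * A <= Emean * A := ler_wpM2r (ltW A0) mk.
have x0E : x0 = Emean * A + 1 by [].
have : g * A < 1.
  rewrite ltNge; apply/negP => gA.
  have : x0 * 1 <= x0 * (g * A) by rewrite ler_wpM2l // ltW.
  rewrite mulrA; lra.
move=> gA1 _ _ _ .
have : g * A * A^-1 < 1 * A^-1 by rewrite ltr_pM2r.
rewrite -mulrA AV mulr1 mul1r; lra.
Qed.

Lemma has_inf_S : has_inf S.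
Proof.
split; first by exists (Emean * A + 1); exact: S_nonempty.
by exists 0 => y /S_ge0.
Qed.

Lemma ccE : cc = inf S. Proof. by []. Qed.

Lemma cc_ge0 : 0 <= cc.
Proof. rewrite ccE; apply: lb_le_inf; first by exists (Emean * A + 1); exact: S_nonempty.
by move=> y /S_ge0. Qed.

Lemma cc_le s : S s -> cc <= s.
Proof. by move=> Ss; rewrite ccE; apply: ge_inf => //; case: has_inf_S. Qed.

Lemma below_cc x : x < cc -> Defs.cdf f x < pp.
Proof.
move=> xc; rewrite ltNge; apply/negP => px.
have := cc_le x px; rewrite leNgt xc //.
Qed.

Lemma mu_itv_lt x y b1 b2 d : y - x < d -> 0 < d ->
  (mu [set` Interval (BSide b1 x) (BSide b2 y)] < d%:E)%E.
Proof.
move=> yx d0; rewrite lebesgue_measure_itv /=.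
case: ifP => _; last by rewrite lte_fin.
by rewrite -EFinD lte_fin.
Qed.


Lemma G_split1 x y : x < y -> G `]-oo, y[ = G `]-oo, x] + G `]x, y[.
Proof.
move=> xy; rewrite (@itv_bndbnd_setU _ _ -oo%O (BRight x) (BLeft y)) ?bnd_simp//.
rewrite G_setU //; apply: lt_disjoint => u v; rewrite !in_itv /= => ux /andP[xv _].
exact: le_lt_trans ux xv.
Qed.

Lemma G_split2 s : cc <= s -> G `]-oo, s] = G `]-oo, cc[ + G `[cc, s].
Proof.
move=> cs; rewrite (@itv_bndbnd_setU _ _ -oo%O (BLeft cc) (BRight s)) ?bnd_simp//.
rewrite G_setU //; apply: lt_disjoint => u v; rewrite !in_itv /= => ux /andP[xv _].
exact: lt_le_trans ux xv.
Qed.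

Lemma G_split3 : G `]-oo, cc[ + G `[cc, +oo[ = 1.
Proof.
rewrite -GT -(itv_setU_setT true cc) G_setU//.
exact: disjoint_rays.
Qed.

Lemma mass_below : G `]-oo, cc[ = pp.
Proof.
apply/eqP; rewrite eq_le; apply/andP; split.
- apply/ler_addgt0Pr => e e0.
  have [d d0 H] := G_abscont e e0.
  set x := cc - d / 2.
  have xc : x < cc by rewrite /x; lra.
  rewrite (G_split1 x cc xc).
  have := below_cc x xc.
  have mx : (mu `]x, cc[%classic < d%:E)%E.
    by apply: mu_itv_lt => //; rewrite /x; lra.
  have := H `]x, cc[%classic (measurable_itv _) mx.
  change (Defs.cdf f x) with (G `]-oo, x]); lra.
- apply/ler_addgt0Pr => e e0.
  have [d d0 H] := G_abscont e e0.
  have [s Ss sc] := inf_adherent d0 has_inf_S.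
  have cs := cc_le s Ss.
  have := G_split2 s cs.
  have mx : (mu `[cc, s]%classic < d%:E)%E.
    by apply: mu_itv_lt => //; rewrite ccE; lra.
  have := H `[cc, s]%classic (measurable_itv _) mx.
  move: Ss; rewrite /S /=.
  change (Defs.cdf f s) with (G `]-oo, s]); lra.
Qed.

Lemma mass_above : G `[cc, +oo[ = A^-1.
Proof. have := G_split3; rewrite mass_below /pp; lra. Qed.

Lemma cc_gt0 : 0 < cc.
Proof.
rewrite lt_neqAle cc_ge0 andbT; apply/negP => /eqP c0.
have := mass_below; rewrite -c0 G_zero /pp; last first.
  by move=> x /=; rewrite in_itv.
have := Ai1; lra.
Qed.


Let mle : measurable_fun setT (fun t : R => cc <= t).
Proof. exact: measurable_fun_ler. Qed.

Lemma mif (g : R -> R) : measurable_fun setT g ->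
  measurable_fun setT (fun t => if cc <= t then g t else 0).
Proof. by move=> mg; exact: measurable_fun_ifT. Qed.

Lemma int_cc (g : R -> R) :
  (\int[mu]_(t in setT) (if cc <= t then g t else 0)%:E =
   \int[mu]_(t in `[cc, +oo[) (g t)%:E)%E.
Proof.
rewrite [RHS]integral_mkcond; apply: eq_integral => t _.
rewrite patchE (_ : (t \in _) = (cc <= t)); first by case: ifP.
apply/idP/idP => H.
  by have := set_mem H; rewrite /= in_itv /= andbT.
by apply/mem_set; rewrite /= in_itv /= andbT.
Qed.

Lemma onoffE snr : onoff f A snr = fun t => if cc <= t then A * snr else 0.
Proof. by []. Qed.

Lemma expect_onoff snr : 0 <= snr -> expect f (onoff f A snr) = snr%:E.
Proof.
move=> s0; rewrite /expect onoffE.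
transitivity (\int[mu]_(t in setT) (if cc <= t then A * snr * f t else 0)%:E)%E.
  by apply: eq_integral => t _; case: ifP => _; rewrite ?mul0r.
rewrite int_cc.
under eq_integral do rewrite EFinM.
rewrite ge0_integralZl_EFin//; last 3 first.
- by move=> t _; rewrite lee_fin.
- exact: mfE.
- by rewrite mulr_ge0 // ltW.
rewrite -GE // mass_above -EFinM; congr (_%:E).
by rewrite mulrAC AV mul1r.
Qed.

Lemma admissible_onoff snr : 0 < snr -> admissible f A snr (onoff f A snr).
Proof.
move=> s0; split.
- rewrite onoffE; apply: mif; exact: measurable_cst.
- by move=> t; rewrite onoffE; case: ifP => // _; rewrite mulr_ge0 // ltW.
- by rewrite expect_onoff // ltW.
- by move=> t; rewrite onoffE; case: ifP => // _; rewrite mulr_ge0 // ltW.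
Qed.


Definition hh (t : R) : R := if cc <= t then A * t * f t else 0.

Lemma hh_ge0 t : 0 <= hh t.
Proof.
rewrite /hh; case: ifP => // ct; rewrite -mulrA mulr_ge0 // ?ltW //.
Qed.

Lemma mhh : measurable_fun setT hh.
Proof.
apply: mif; apply: measurable_funM => //.
Qed.

Definition MM : R := fine (\int[mu]_(t in setT) (hh t)%:E)%E.

Lemma MME : MM%:E = (\int[mu]_(t in setT) (hh t)%:E)%E.
Proof.
rewrite fineK // ge0_fin_numE; last by apply: integral_ge0 => t _; rewrite lee_fin hh_ge0.
apply: (@le_lt_trans _ _ (A%:E * \int[mu]_(t in setT) (t * f t)%:E)%E).
  rewrite -ge0_integralZl_EFin //; last 3 first.
  - by move=> t _; rewrite lee_fin.
  - exact: mtf.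
  - exact: ltW.
  under [X in (_ <= X)%E]eq_integral do rewrite -EFinM.
  apply: ge0_le_integral => //.
  - by move=> t _; rewrite lee_fin hh_ge0.
  - by apply/measurable_EFinP; exact: mhh.
  - apply/measurable_EFinP; apply: measurable_funM => //.
    exact: measurable_funM.
  - move=> t _; rewrite lee_fin /hh; case: ifP => _; first by rewrite mulrA.
    by rewrite mulr_ge0 // ltW.
by rewrite -EmeanE -EFinM ltry.
Qed.

Lemma MM_gt0 : 0 < MM.
Proof.
rewrite -lte_fin MME /hh int_cc.
apply: (@lt_le_trans _ _ (\int[mu]_(t in `[cc, +oo[) ((A * cc) * f t)%:E)%E).
  under eq_integral do rewrite EFinM.
  rewrite ge0_integralZl_EFin //; last 3 first.
  - by move=> t _; rewrite lee_fin.
  - exact: mfE.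
  - by rewrite mulr_ge0 // ltW // cc_gt0.
  rewrite -GE // mass_above -EFinM lte_fin mulrAC AV mul1r; exact: cc_gt0.
apply: ge0_le_integral => //.
- by move=> t _; rewrite lee_fin mulr_ge0 // mulr_ge0 // ltW // cc_gt0.
- apply/measurable_EFinP; apply: measurable_funM => //; try exact: measurable_cst.
  all: try exact: measurable_funTS.
- apply/measurable_EFinP; apply: measurable_funM => //; try exact: measurable_funTS.
  all: try (apply: measurable_funM => //; exact: measurable_cst).
- move=> t; rewrite /= in_itv /= andbT => ct.
  by rewrite lee_fin ler_wpM2r // ler_wpM2l // ltW.
Qed.


Lemma rate_pt (P : R -> R) (P0 : forall t, 0 <= P t) t :
  0 <= ln (1 + P t * t) * f t <= P t * t * f t.
Proof.
have [t0|t0] := ltP t 0; first by rewrite fn // !mulr0 lexx.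
have x0 : 0 <= P t * t by rewrite mulr_ge0.
have l0 : 0 <= ln (1 + P t * t) by apply: ln_ge0; rewrite lerDl.
have l1 : ln (1 + P t * t) <= P t * t by apply: le_ln1Dx; lra.
by rewrite mulr_ge0 //= ler_wpM2r.
Qed.

Lemma mrate (P : R -> R) : measurable_fun setT P ->
  measurable_fun setT (fun t => ln (1 + P t * t) * f t).
Proof.
move=> mP; apply: measurable_funM => //.
rewrite (_ : (fun x => ln (1 + P x * x)) = (@ln R) \o (fun x => 1 + P x * x)) //.
apply: measurableT_comp; first exact: measurable_ln.
apply: measurable_funD; first exact: measurable_cst.
exact: measurable_funM.
Qed.

Lemma mPtf (P : R -> R) : measurable_fun setT P ->
  measurable_fun setT (fun t => P t * t * f t).
Proof. by move=> mP; apply: measurable_funM => //; exact: measurable_funM. Qed.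

Lemma rate_ge0 (P : R -> R) : (forall t, 0 <= P t) -> (0 <= rate f P)%E.
Proof.
move=> P0; apply: integral_ge0 => t _; rewrite lee_fin.
by case/andP: (rate_pt P P0 t).
Qed.

Lemma rate_le_lin (P : R -> R) : measurable_fun setT P -> (forall t, 0 <= P t) ->
  (rate f P <= \int[mu]_(t in setT) (P t * t * f t)%:E)%E.
Proof.
move=> mP P0; apply: ge0_le_integral => //.
- by move=> t _; rewrite lee_fin; case/andP: (rate_pt P P0 t).
- by apply/measurable_EFinP; exact: mrate.
- by apply/measurable_EFinP; exact: mPtf.
- by move=> t _; rewrite lee_fin; case/andP: (rate_pt P P0 t).
Qed.


Lemma bathtub (P : R -> R) snr : 0 < snr -> admissible f A snr P ->
  (\int[mu]_(t in setT) (P t * t * f t)%:E <= (snr * MM)%:E)%E.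
Proof.
move=> s0 [mP P0 EP PA].
set Q := onoff f A snr.
have mQ : measurable_fun setT Q by rewrite /Q onoffE; apply: mif; exact: measurable_cst.
have Q0 t : 0 <= Q t by rewrite /Q onoffE; case: ifP => // _; rewrite mulr_ge0 // ltW.
have pt t : P t * t * f t + cc * (Q t * f t) <= snr * hh t + cc * (P t * f t).
  rewrite /Q onoffE /hh; have := PA t; have := P0 t; have := f0 t.
  case: ifP => ct Pa P0t f0t.
    have H : 0 <= f t * ((A * snr - P t) * (t - cc)).
      by rewrite mulr_ge0 // mulr_ge0 // subr_ge0.
    nra.
  have H : 0 <= f t * (P t * (cc - t)).
    by rewrite mulr_ge0 // mulr_ge0 // subr_ge0 ltW // ltNge ct.
  nra.
have Ptf0 t : 0 <= P t * t * f t.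
  have [t0|t0] := ltP t 0; first by rewrite fn // mulr0.
  by rewrite mulr_ge0 // mulr_ge0.
have cc0 := cc_ge0.
have LHS : (\int[mu]_(t in setT) ((P t * t * f t) + cc * (Q t * f t))%:E =
    \int[mu]_(t in setT) (P t * t * f t)%:E + (cc * snr)%:E)%E.
  under eq_integral do rewrite EFinD.
  rewrite ge0_integralD //; last 4 first.
  - by move=> t _; rewrite lee_fin.
  - by apply/measurable_EFinP; exact: mPtf.
  - by move=> t _; rewrite lee_fin mulr_ge0 // mulr_ge0.
  - apply/measurable_EFinP; apply: measurable_funM => //; try exact: measurable_cst.
    all: try exact: measurable_funM.
  congr (_ + _)%E.
  under eq_integral do rewrite EFinM.
  rewrite ge0_integralZl_EFin //; last 2 first.
  - by move=> t _; rewrite lee_fin mulr_ge0.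
  - by apply/measurable_EFinP; exact: measurable_funM.
  by have := expect_onoff snr (ltW s0); rewrite /expect /Q => ->; rewrite EFinM.
have RHS : (\int[mu]_(t in setT) (snr * hh t + cc * (P t * f t))%:E =
    (snr * MM)%:E + cc%:E * expect f P)%E.
  under eq_integral do rewrite EFinD.
  rewrite ge0_integralD //; last 4 first.
  - by move=> t _; rewrite lee_fin mulr_ge0 // ?hh_ge0 // ltW.
  - apply/measurable_EFinP; apply: measurable_funM => //; try exact: measurable_cst.
    all: try exact: mhh.
  - by move=> t _; rewrite lee_fin mulr_ge0 // mulr_ge0.
  - apply/measurable_EFinP; apply: measurable_funM => //; try exact: measurable_cst.
    all: try exact: measurable_funM.
  congr (_ + _)%E.
    under eq_integral do rewrite EFinM.
    rewrite ge0_integralZl_EFin //; last 3 first.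
    - by move=> t _; rewrite lee_fin hh_ge0.
    - by apply/measurable_EFinP; exact: mhh.
    - exact: ltW.
    by rewrite -MME EFinM.
  under eq_integral do rewrite EFinM.
  rewrite ge0_integralZl_EFin //.
  - by move=> t _; rewrite lee_fin mulr_ge0.
  - by apply/measurable_EFinP; exact: measurable_funM.
have : (\int[mu]_(t in setT) ((P t * t * f t) + cc * (Q t * f t))%:E <=
    \int[mu]_(t in setT) (snr * hh t + cc * (P t * f t))%:E)%E.
  apply: ge0_le_integral => //.
  - by move=> t _; rewrite lee_fin addr_ge0 // mulr_ge0 // mulr_ge0.
  - apply/measurable_EFinP; apply: measurable_funD.
      exact: mPtf.
    apply: measurable_funM => //; try exact: measurable_cst.
    all: try exact: measurable_funM.
  - apply/measurable_EFinP; apply: measurable_funD.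
      apply: measurable_funM => //; try exact: measurable_cst.
      all: try exact: mhh.
    apply: measurable_funM => //; try exact: measurable_cst.
    all: try exact: measurable_funM.
  - by move=> t _; rewrite lee_fin.
rewrite LHS RHS => H.
have : (\int[mu]_(t in setT) (P t * t * f t)%:E + (cc * snr)%:E <=
    (snr * MM)%:E + (cc * snr)%:E)%E.
  apply: (le_trans H); apply: leeD2l; rewrite EFinM.
  exact: lee_wpmul2l.
by rewrite leeD2rE.
Qed.


Definition gT (n : nat) (t : R) : R := if t <= n%:R then hh t else 0.

Lemma gT_ge0 n t : 0 <= gT n t.
Proof. by rewrite /gT; case: ifP => // _; exact: hh_ge0. Qed.

Lemma mgT n : measurable_fun setT (gT n).
Proof.
apply: measurable_fun_ifT; [exact: measurable_fun_ler|exact: mhh|exact: measurable_cst].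
Qed.

Lemma exists_trunc e : 0 < e -> exists N : nat,
  ((MM - e)%:E < \int[mu]_(t in setT) (gT N t)%:E)%E.
Proof.
move=> e0.
have g0 : forall n t, setT t -> (0 <= (gT n t)%:E)%E.
  by move=> n t _; rewrite lee_fin gT_ge0.
have mg : forall n, measurable_fun setT (fun t => (gT n t)%:E).
  by move=> n; apply/measurable_EFinP; exact: mgT.
have nd : forall t, setT t ->
    {homo (fun n => (gT n t)%:E) : n m / (n <= m)%N >-> (n <= m)%E}.
  move=> t _ n m nm; rewrite lee_fin /gT; case: ifP => tn; last first.
    by case: ifP => _; rewrite ?hh_ge0.
  by rewrite ifT // (le_trans tn) // ler_nat.
have mc := monotone_convergence mu measurableT mg g0 nd.
have limE : (fun t => limn (fun n => (gT n t)%:E)) = (fun t => (hh t)%:E).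
  apply/funext => t; apply: (lim_near_cst (@ereal_hausdorff R)); near=> n; rewrite /gT ifT //.
  near: n; exact: nbhs_infty_ger.
have ndI : nondecreasing_seq (fun n => \int[mu]_(t in setT) (gT n t)%:E)%E.
  move=> n m nm /=; apply: (ge0_le_integral mu measurableT (g0 n) (mg n) (mg m)).
  by move=> t _; exact: nd.
have L := cvg_lim (@ereal_hausdorff R) (ereal_nondecreasing_cvgn ndI).
have supE : MM%:E = ereal_sup (range (fun n => \int[mu]_(t in setT) (gT n t)%:E)%E).
  by rewrite -L // -mc limE MME.
have : ((MM - e)%:E < ereal_sup (range (fun n => \int[mu]_(t in setT) (gT n t)%:E)%E))%E.
  by rewrite -supE lte_fin; lra.
by move=> /ereal_sup_gtP [y [N _ <-] H]; exists N.
Unshelve. all: by end_near.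
Qed.


Lemma ln_lower (x : R) : 0 <= x -> x - x ^+ 2 <= ln (1 + x).
Proof.
move=> x0; have y0 : 0 < 1 + x by lra.
set u := (1 + x)^-1.
have u0 : 0 < u by rewrite invr_gt0.
have uy : u * (1 + x) = 1 by rewrite mulVf // gt_eqF.
have H0 : -1 < u - 1 by lra.
have := le_ln1Dx H0.
rewrite addrC subrK /u lnV ?posrE // -/u => H.
have : x - x ^+ 2 <= 1 - u.
  have -> : 1 - u = u * x by rewrite -{1}uy; ring.
  have : (x - x ^+ 2 - u * x) * (1 + x) = - x ^+ 3.
    have -> : (x - x ^+ 2 - u * x) * (1 + x) = x - x ^+ 3 - x * (u * (1 + x)) by ring.
    by rewrite uy; ring.
  move=> E; rewrite -subr_le0.
  have : (x - x ^+ 2 - u * x) * (1 + x) <= 0 by rewrite E oppr_le0 exprn_ge0.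
  move=> Hm; nra.
lra.
Qed.

Lemma low_pt snr (N : nat) t : 0 < snr ->
  snr * (1 - A * snr * N%:R) * gT N t <= ln (1 + onoff f A snr t * t) * f t.
Proof.
move=> s0.
have P0 : forall t, 0 <= onoff f A snr t.
  by move=> u; rewrite onoffE; case: ifP => // _; rewrite mulr_ge0 // ltW.
rewrite /gT /hh; case: ifP => tN; last by rewrite mulr0; case/andP: (rate_pt _ P0 t).
have := rate_pt _ P0 t; rewrite onoffE; case: ifP => ct /andP[L0 _]; last by rewrite mulr0.
have t0 : 0 <= t by exact: le_trans cc_ge0 ct.
have x0 : 0 <= A * snr * t by rewrite mulr_ge0 // mulr_ge0 // ltW.
have lx := ln_lower _ x0.
have h1 : snr * (1 - A * snr * N%:R) * (A * t) <= ln (1 + A * snr * t).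
  apply: le_trans lx.
  have xN : A * snr * t <= A * snr * N%:R by rewrite ler_wpM2l // mulr_ge0 // ltW.
  have : (A * snr * t) * (A * snr * t) <= (A * snr * t) * (A * snr * N%:R).
    exact: ler_wpM2l.
  rewrite expr2; nra.
rewrite mulrA; apply: ler_wpM2r => //.
Qed.


Lemma cap_le snr : 0 < snr -> (capacity f A snr <= (snr * MM)%:E)%E.
Proof.
move=> s0; apply/ereal_supP => _ [P aP <-].
case: (aP) => mP P0 _ _.
exact: le_trans (rate_le_lin _ mP P0) (bathtub _ _ s0 aP).
Qed.

Lemma rate_le_cap snr : 0 < snr ->
  (rate f (onoff f A snr) <= capacity f A snr)%E.
Proof.
move=> s0; apply: ereal_sup_ubound; exists (onoff f A snr) => //.
exact: admissible_onoff.
Qed.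

Lemma rate_lower e : 0 < e -> \forall snr \near 0^'+,
  ((snr * (MM - e))%:E <= rate f (onoff f A snr))%E.
Proof.
move=> e0.
have e20 : 0 < e / 2 by rewrite divr_gt0.
have [N HN] := exists_trunc _ e20.
have IN0 : (0 <= \int[mu]_(t in setT) (gT N t)%:E)%E.
  by apply: integral_ge0 => t _; rewrite lee_fin gT_ge0.
have INle : (\int[mu]_(t in setT) (gT N t)%:E <= MM%:E)%E.
  rewrite MME; apply: ge0_le_integral => //.
  - by move=> t _; rewrite lee_fin gT_ge0.
  - by apply/measurable_EFinP; exact: mgT.
  - by apply/measurable_EFinP; exact: mhh.
  - by move=> t _; rewrite lee_fin /gT; case: ifP => _; rewrite ?hh_ge0.
set MN := fine (\int[mu]_(t in setT) (gT N t)%:E)%E.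
have MNE : MN%:E = (\int[mu]_(t in setT) (gT N t)%:E)%E.
  rewrite fineK // ge0_fin_numE //; exact: le_lt_trans INle (ltry _).
have MNlo : MM - e / 2 < MN by rewrite -lte_fin MNE.
have MNhi : MN <= MM by rewrite -lee_fin MNE.
have M0 := MM_gt0.
set K := A * N%:R * (MM + 1) + 1.
have AN0 : 0 <= A * N%:R by rewrite mulr_ge0 // ltW.
have K0 : 0 < K by rewrite /K; have := mulr_ge0 AN0 (ltW (ltr_wpDr (ltW M0) ltr01)); lra.
have eK0 : 0 < e / 2 / K by rewrite divr_gt0.
have K10 : 0 < 1 / K by rewrite divr_gt0.
near=> snr.
have s0 : 0 < snr by near: snr; exact: nbhs_right_gt.
have sK1 : snr < e / 2 / K by near: snr; exact: nbhs_right_lt.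
have sK2 : snr < 1 / K by near: snr; exact: nbhs_right_lt.
rewrite ltr_pdivlMr // in sK1; rewrite ltr_pdivlMr // in sK2.
have a0 : 0 <= A * snr * N%:R by rewrite mulrAC mulr_ge0 // ltW.
have KE : snr * K = (A * snr * N%:R) * MM + A * snr * N%:R + snr.
  by rewrite /K; ring.
have a1 : A * snr * N%:R <= 1.
  have : 0 <= (A * snr * N%:R) * MM by rewrite mulr_ge0 // ltW.
  lra.
have aM : A * snr * N%:R * MM <= e / 2 by lra.
have P0 : forall t, 0 <= onoff f A snr t.
  by move=> u; rewrite onoffE; case: ifP => // _; rewrite mulr_ge0 // ltW.
have mQ : measurable_fun setT (onoff f A snr).
  by rewrite onoffE; apply: mif; exact: measurable_cst.
have c0 : 0 <= snr * (1 - A * snr * N%:R) by rewrite mulr_ge0 // ?subr_ge0 // ltW.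
apply: (@le_trans _ _ ((snr * (1 - A * snr * N%:R) * MN)%:E)).
  rewrite lee_fin -mulrA ler_wpM2l // ?ltW //.
  have : 0 <= (1 - A * snr * N%:R) * (MN - (MM - e / 2)).
    by rewrite mulr_ge0 // subr_ge0 // ltW.
  have : 0 <= A * snr * N%:R * e by rewrite mulr_ge0 // ltW.
  nra.
rewrite EFinM MNE -ge0_integralZl_EFin //; last 2 first.
- by move=> t _; rewrite lee_fin gT_ge0.
- by apply/measurable_EFinP; exact: mgT.
under eq_integral do rewrite -EFinM.
apply: ge0_le_integral => //.
- by move=> t _; rewrite lee_fin mulr_ge0 // gT_ge0.
- apply/measurable_EFinP; apply: measurable_funM => //; try exact: measurable_cst.
  all: try exact: mgT.
- by apply/measurable_EFinP; exact: mrate.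
- by move=> t _; rewrite lee_fin; exact: low_pt.
Unshelve. all: by end_near.
Qed.

End Proof.

Theorem corollary1 (R : realType) (f : R -> R) (A : R) :
  gain_density f -> 1 < A ->
  (forall snr : R, 0 < snr -> admissible f A snr (onoff f A snr)) /\
  ((fine (rate f (onoff f A snr)) / fine (capacity f A snr))
     @[snr --> 0^'+] --> (1 : R)).
Proof.
move=> Hf A1; split; first exact: admissible_onoff.
apply/cvgrPdist_le => e e0.
set M := MM R f A.
have M0 : 0 < M := MM_gt0 _ _ _ Hf A1.
have pe : 0 < 1 + e by lra.
have e1 : 0 < e / (1 + e) by rewrite divr_gt0.
set eps := M * (e / (1 + e)).
have eps0 : 0 < eps by rewrite mulr_gt0.
have epsE : eps * (1 + e) = M * e.
  by rewrite /eps -mulrA divfK // gt_eqF.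
have low := rate_lower _ _ _ Hf A1 _ eps0.
near=> snr.
have s0 : 0 < snr by near: snr; exact: nbhs_right_gt.
have rl : ((snr * (M - eps))%:E <= rate f (onoff f A snr))%E by near: snr; exact: low.
have [_ P0 _ _] := admissible_onoff _ _ _ Hf A1 _ s0.
have r0 := rate_ge0 _ _ Hf _ P0.
have rc := rate_le_cap _ _ _ Hf A1 _ s0.
have cM := cap_le _ _ _ Hf A1 _ s0.
have rfin : rate f (onoff f A snr) \is a fin_num.
  rewrite ge0_fin_numE //; exact: le_lt_trans rc (le_lt_trans cM (ltry _)).
have cfin : capacity f A snr \is a fin_num.
  rewrite ge0_fin_numE ?(le_trans r0 rc) //; exact: le_lt_trans cM (ltry _).
move: rl rc cM; rewrite -(fineK rfin) -(fineK cfin) !lee_fin.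
set r := fine _; set c := fine _ => rl rc cM.
have c0 : 0 < c.
  apply: lt_le_trans rc; apply: lt_le_trans rl; rewrite mulr_gt0 //.
  have : eps < M by rewrite /eps gtr_pMr // ltr_pdivrMr // mul1r; lra.
  lra.
have rc1 : r / c <= 1 by rewrite ler_pdivrMr // mul1r.
rewrite ger0_norm ?subr_ge0 //.
set q := r / c.
have qc : q * c = r by rewrite /q mulfVK // gt_eqF.
have H1 : c - r <= snr * eps by move: cM rl; rewrite -/M; lra.
have H2 : snr * eps <= e * c.
  have : snr * eps * (1 + e) = e * (snr * M) by rewrite -mulrA epsE; ring.
  have : snr * (M - eps) * e <= r * e by rewrite ler_wpM2r // ltW.
  nra.
nra.
Unshelve. all: by end_near.
Qed.
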